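(* Let $m\ge 1$, $n\ge 1$, and for each $i\in\{1,\dots,m\}$ let $f_i:\mathbb{R}^n\to\mathbb{R}$ be differentiable, with $\nabla f_i$ being $s_i$-Lipschitz for some $s_i>0$, and $f_i$ being $c_i$-strongly convex for some $c_i>0$, i.e. $(\nabla f_i(x)-\nabla f_i(y))^{\top}(x-y)\ge c_i\|x-y\|^2$ for all $x,y\in\mathbb{R}^n$. Let $\alpha_i>0$ with $\sum_{i=1}^m\alpha_i=1$, let $\beta_i>0$, let $\delta>0$, and let $\sigma_i$ satisfy $$0<\sigma_i<\frac{\sqrt{2c_i}}{\sqrt{2c_i}+\sqrt{\beta_i}}.$$ Let $z^*$ be the unique minimizer of $\sum_{i=1}^m\alpha_i f_i(z)$ over $z\in\mathbb{R}^n$, and set $u_i^*=z^*$ and $\lambda_i^*=\nabla f_i(z^* )$ for all $i$. Given initial points $u_i^0,\lambda_i^0\in\mathbb{R}^n$ ($i\in[m]$) and $z^0\in\mathbb{R}^n$, let the sequence $\{(u^k,\lambda^k,z^k)\}_{k\ge0}$ be generated as follows: for $k\ge 0$ and every $i\in[m]$, 1. $u_i^{k+1}\in\mathbb{R}^n$ is any point satisfying the inexactness criterion $\|e_i^k(u_i^{k+1})\|\le\sigma_i\|e_i^k(u_i^k)\|$, where $e_i^k(u_i)=\nabla f_i(u_i)-\lambda_i^k+\beta_i(u_i-z^k)$; 2. $\lambda_i^{k+1}=\lambda_i^k-\beta_i(u_i^{k+1}-z^k)$; 3. $z^{k+1}=\frac{1}{1+\delta}\hat z^{k+1}+\frac{\delta}{1+\delta}z^k$,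 where $\hat z^{k+1}=\frac{1}{\sum_{i=1}^m\alpha_i\beta_i}\sum_{i=1}^m\alpha_i(\beta_iu_i^{k+1}-\lambda_i^{k+1})$ (equivalently, $z^{k+1}$ minimizes $\sum_{i=1}^m\alpha_i\big(f_i(u_i^{k+1})-(\lambda_i^{k+1})^{\top}(u_i^{k+1}-z)+\frac{\beta_i}{2}\|u_i^{k+1}-z\|^2\big)+\frac{\delta}{2}\sum_{i=1}^m\alpha_i\beta_i\|z-z^k\|^2$ over $z\in\mathbb{R}^n$). Then for every $i\in[m]$, as $k\to\infty$: $\|e_i^k(u_i^{k+1})\|\to0$, $u_i^k\to u_i^*$, $\lambda_i^k\to\lambda_i^*$, and $z^k\to z^*$.
   Context: This is the convergence of the inexact federated ADMM (all clients participate in every round) applied to $\min_{u_i,z}\sum_i\alpha_if_i(u_i)$ subject to $u_i=z$ for all $i$, whose augmented Lagrangian is $L_{\alpha,\beta}(u,\lambda,z)=\sum_{i=1}^m\alpha_i\big(f_i(u_i)-\lambda_i^{\top}(u_i-z)+\frac{\beta_i}{2}\|u_i-z\|^2\big)$. The point $(u^*,\lambda^*,z^* )$ is the unique primal–dual solution of this constrained problem. $\|\cdot\|$ is the Euclidean norm and $[m]=\{1,\dots,m\}$. *)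

(* Defs.v *)
From HB Require Import structures.
From mathcomp Require Import all_boot all_order all_algebra.
From mathcomp Require Import all_classical all_reals all_analysis.
Set Implicit Arguments. Unset Strict Implicit. Unset Printing Implicit Defensive.
Import Order.TTheory GRing.Theory Num.Theory.
Import numFieldNormedType.Exports.
Local Open Scope ring_scope.

Definition dotv {R : realType} {n : nat} (u v : 'rV[R]_n) : R :=
  \sum_(j < n) u 0 j * v 0 j.

Definition enorm {R : realType} {n : nat} (v : 'rV[R]_n) : R :=
  Num.sqrt (dotv v v).

Definition is_gradient {R : realType} {n : nat}
  (f : 'rV[R]_n -> R) (g : 'rV[R]_n -> 'rV[R]_n) : Prop :=
  forall x : 'rV[R]_n, differentiable f x /\ forall h, 'd f x h = dotv (g x) h.

(* Main.v *)
Require Import Defs.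
From HB Require Import structures.
From mathcomp Require Import all_boot all_order all_algebra.
From mathcomp Require Import all_classical all_reals all_analysis.
From mathcomp Require Import ring lra.
Import Order.TTheory GRing.Theory Num.Theory.
Import numFieldNormedType.Exports.
Local Open Scope classical_set_scope.
Local Open Scope ring_scope.

Section S.
Variable R : realType.

Lemma key_id m (al be lam lam' ls u' : 'I_m -> R) (z z' zs dl : R) :
  (forall i, be i != 0) ->
  (forall i, lam' i = lam i - be i * (u' i - z)) ->
  \sum_i al i * ls i = 0 ->
  (1 + dl) * (\sum_i al i * be i) * z' =
    \sum_i al i * (be i * u' i - lam' i) + dl * (\sum_i al i * be i) * z ->
  \sum_i al i / be i * (lam' i - ls i + be i * (z' - zs)) ^+ 2
    + dl * (\sum_i al i * be i) * (z' - zs) ^+ 2 =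
  \sum_i al i / be i * (lam i - ls i + be i * (z - zs)) ^+ 2
    + dl * (\sum_i al i * be i) * (z - zs) ^+ 2
  - 2 * \sum_i al i * ((u' i - zs) * (lam' i - ls i))
  - \sum_i al i * be i * (u' i - z') ^+ 2
  - dl * (\sum_i al i * be i) * (z' - z) ^+ 2.
Proof.
move=> hb hl hls hz.
set B := \sum_i al i * be i.
have H1 : forall i, al i / be i * (lam' i - ls i + be i * (z' - zs)) ^+ 2 =
   al i / be i * (lam i - ls i + be i * (z - zs)) ^+ 2
   - 2 * (al i * ((u' i - zs) * (lam' i - ls i)))
   - al i * be i * (u' i - z') ^+ 2
   + 2 * (z' - zs) * (al i * be i * (z' - zs) + al i * lam i - al i * ls i
        + al i * be i * (z - zs) - 2 * (al i * be i * u' i) + 2 * (al i * be i) * zs).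
  by move=> i; rewrite hl; field; exact: hb.
have E : \sum_i (al i * be i * (z' - zs) + al i * lam i - al i * ls i
        + al i * be i * (z - zs) - 2 * (al i * be i * u' i) + 2 * (al i * be i) * zs)
  = B * ((z' - zs) + (z - zs) + 2 * zs) + \sum_i al i * lam i - \sum_i al i * ls i
     - 2 * \sum_i al i * be i * u' i.
  rewrite (eq_bigr (fun i => al i * be i * ((z' - zs) + (z - zs) + 2 * zs) + al i * lam i - al i * ls i - 2 * (al i * be i * u' i))); last by move=> i _; ring.
  by rewrite !sumrB big_split /= -mulr_suml -mulr_sumr.
have hz' : (1 + dl) * B * z' = 2 * \sum_i al i * be i * u' i - \sum_i al i * lam i
   - B * z + dl * B * z.
  rewrite hz /B; congr (_ + _).
  rewrite (eq_bigr (fun i => 2 * (al i * be i * u' i) - al i * lam i - al i * be i * z)); last by move=> i _; rewrite hl; ring.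
  by rewrite !sumrB -mulr_sumr -mulr_suml.
have : \sum_i al i * lam i = 2 * \sum_i al i * be i * u' i - B * z + dl * B * z - (1 + dl) * B * z'.
  by rewrite hz'; ring.
move=> hlam.
rewrite (eq_bigr _ (fun i _ => H1 i)) big_split /= !sumrB -!mulr_sumr E hls hlam.
rewrite -/B. ring.
Qed.

Definition nsq {n} (v : 'rV[R]_n) := dotv v v.

Lemma sum_exch m n (c : 'I_m -> R) (X : 'I_m -> 'I_n -> R) :
  \sum_i c i * \sum_j X i j = \sum_j \sum_i c i * X i j.
Proof. under eq_bigr do rewrite mulr_sumr. exact: exchange_big. Qed.

Lemma Vid m n (al be : 'I_m -> R) (dl : R) (lam lam' u' ls : 'I_m -> 'rV[R]_n)
  (z z' zs : 'rV[R]_n) :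
  (forall i, be i != 0) ->
  (forall i, lam' i = lam i - be i *: (u' i - z)) ->
  (forall j, \sum_i al i * ls i 0 j = 0) ->
  (forall j, (1 + dl) * (\sum_i al i * be i) * z' 0 j =
    \sum_i al i * (be i * u' i 0 j - lam' i 0 j) + dl * (\sum_i al i * be i) * z 0 j) ->
  \sum_i al i / be i * nsq (lam' i - ls i + be i *: (z' - zs))
    + dl * (\sum_i al i * be i) * nsq (z' - zs) =
  \sum_i al i / be i * nsq (lam i - ls i + be i *: (z - zs))
    + dl * (\sum_i al i * be i) * nsq (z - zs)
  - 2 * \sum_i al i * dotv (u' i - zs) (lam' i - ls i)
  - \sum_i al i * be i * nsq (u' i - z')
  - dl * (\sum_i al i * be i) * nsq (z' - z).
Proof.
move=> hb hl hls hz.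
have Hj : forall j,
  \sum_i al i / be i * ((lam' i - ls i + be i *: (z' - zs)) 0 j * (lam' i - ls i + be i *: (z' - zs)) 0 j)
    + dl * (\sum_i al i * be i) * ((z' - zs) 0 j * (z' - zs) 0 j) =
  \sum_i al i / be i * ((lam i - ls i + be i *: (z - zs)) 0 j * (lam i - ls i + be i *: (z - zs)) 0 j)
    + dl * (\sum_i al i * be i) * ((z - zs) 0 j * (z - zs) 0 j)
  - 2 * \sum_i al i * ((u' i - zs) 0 j * (lam' i - ls i) 0 j)
  - \sum_i al i * be i * ((u' i - z') 0 j * (u' i - z') 0 j)
  - dl * (\sum_i al i * be i) * ((z' - z) 0 j * (z' - z) 0 j).
  move=> j; rewrite !mxE.
  under eq_bigr do rewrite !mxE.
  under [X in _ = X + _ - _ - _ - _]eq_bigr do rewrite !mxE.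
  under [X in _ = _ - 2 * X - _ - _]eq_bigr do rewrite !mxE.
  under [X in _ = _ - X - _]eq_bigr do rewrite !mxE.
  rewrite -!expr2.
  apply: key_id => //.
  - by move=> i; rewrite hl !mxE.
set B := \sum_i al i * be i.
rewrite /nsq /dotv !sum_exch [2 * _]mulr_sumr.
do 3 rewrite [dl * B * _]mulr_sumr.
rewrite -!big_split /= -!sumrB.
by apply: eq_bigr => j _; exact: Hj.
Qed.

Lemma nsq_ge0 n (v : 'rV[R]_n) : 0 <= nsq v.
Proof. by apply: sumr_ge0 => j _; rewrite -expr2 sqr_ge0. Qed.

Lemma enorm_sq n (v : 'rV[R]_n) : enorm v ^+ 2 = nsq v.
Proof. by rewrite /enorm sqr_sqrtr // nsq_ge0. Qed.

Lemma enorm_ge0 n (v : 'rV[R]_n) : 0 <= enorm v.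
Proof. exact: sqrtr_ge0. Qed.

Lemma young_dot n (x y : 'rV[R]_n) (eta : R) : 0 < eta ->
  2 * dotv x y <= eta * nsq x + eta^-1 * nsq y.
Proof.
move=> he; rewrite /nsq /dotv !mulr_sumr -big_split /=.
apply: ler_sum => j _.
have h : 0 <= eta^-1 * (eta * x 0 j - y 0 j) ^+ 2.
  by apply: mulr_ge0; [rewrite invr_ge0 ltW | exact: sqr_ge0].
have e : eta * (x 0 j * x 0 j) + eta^-1 * (y 0 j * y 0 j) - 2 * (x 0 j * y 0 j)
   = eta^-1 * (eta * x 0 j - y 0 j) ^+ 2.
  by field; rewrite gt_eqF.
by rewrite -subr_ge0 e.
Qed.

Lemma young_sum n (x y : 'rV[R]_n) (q : R) : 0 < q ->
  nsq (x + y) <= (1 + q) * nsq x + (1 + q^-1) * nsq y.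
Proof.
move=> hq; rewrite /nsq /dotv !mulr_sumr -big_split /=.
apply: ler_sum => j _; rewrite !mxE.
have h : 0 <= q^-1 * (q * x 0 j - y 0 j) ^+ 2.
  by apply: mulr_ge0; [rewrite invr_ge0 ltW | exact: sqr_ge0].
have e : (1 + q) * (x 0 j * x 0 j) + (1 + q^-1) * (y 0 j * y 0 j)
   - (x 0 j + y 0 j) * (x 0 j + y 0 j)
   = q^-1 * (q * x 0 j - y 0 j) ^+ 2.
  by field; rewrite gt_eqF.
by rewrite -subr_ge0 e.
Qed.

Lemma nsq_scale n (a : R) (v : 'rV[R]_n) : nsq (a *: v) = a ^+ 2 * nsq v.
Proof.
rewrite /nsq /dotv mulr_sumr; apply: eq_bigr => j _; rewrite !mxE; ring.
Qed.

Lemma nsqN n (v : 'rV[R]_n) : nsq (- v) = nsq v.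
Proof. rewrite /nsq /dotv; apply: eq_bigr => j _; rewrite !mxE; ring. Qed.

Lemma dotvBr n (x y w : 'rV[R]_n) : dotv x (y - w) = dotv x y - dotv x w.
Proof. rewrite /dotv -sumrB; apply: eq_bigr => j _; rewrite !mxE; ring. Qed.

Lemma dotvC n (x y : 'rV[R]_n) : dotv x y = dotv y x.
Proof. rewrite /dotv; apply: eq_bigr => j _; ring. Qed.

Lemma nsq_sub2 n (x y : 'rV[R]_n) : nsq (x - y) <= 2 * nsq x + 2 * nsq y.
Proof.
have := @young_sum n x (- y) 1 ltr01; rewrite invr1 nsqN.
by have -> : (1 + 1 : R) = 2 by [].
Qed.

Lemma sq_le (x y : R) : 0 <= x -> x <= y -> x ^+ 2 <= y ^+ 2.
Proof. move=> h0 h1; rewrite !expr2; apply: ler_pM => //. Qed.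

Lemma step_i n (gu gu' gzs lam lam' u u' z zs : 'rV[R]_n) (bt c sg q : R) :
  0 < bt -> 0 < q -> 0 <= sg ->
  lam' = lam - bt *: (u' - z) ->
  enorm (gu' - lam + bt *: (u' - z)) <= sg * enorm (gu - lam + bt *: (u - z)) ->
  dotv (gu' - gzs) (u' - zs) >= c * enorm (u' - zs) ^+ 2 ->
  - (2 * dotv (u' - zs) (lam' - gzs)) + q / bt * nsq (gu' - lam')
   <= sg ^+ 2 * (1 + q) ^+ 2 * (q / bt * nsq (gu - lam) + bt * nsq (u - z))
      - (2 * c - bt / q ^+ 2) * nsq (u' - zs).
Proof.
move=> hb hq hs hl hcr hmo.
have ea : gu' - lam' = gu' - lam + bt *: (u' - z).
  by apply/rowP => j; rewrite hl !mxE; ring.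
have hA : nsq (gu' - lam') <= sg ^+ 2 * nsq (gu - lam + bt *: (u - z)).
  rewrite ea -!enorm_sq -exprMn; apply: sq_le => //; exact: enorm_ge0.
have hY := @young_sum n (gu - lam) (bt *: (u - z)) q hq.
rewrite nsq_scale in hY.
have hdot : dotv (u' - zs) (lam' - gzs) =
    dotv (u' - zs) (gu' - gzs) - dotv (u' - zs) (gu' - lam').
  by rewrite -dotvBr; congr dotv; apply/rowP => j; rewrite !mxE; ring.
rewrite enorm_sq dotvC in hmo.
have hy := @young_dot n (u' - zs) (gu' - lam') (bt / q ^+ 2)
   (divr_gt0 hb (exprn_gt0 2 hq)).
have hinv : (bt / q ^+ 2)^-1 = q ^+ 2 / bt by rewrite invf_div.
rewrite hinv in hy.
have hc : 0 <= q ^+ 2 / bt + q / bt.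
  by apply: addr_ge0; apply: divr_ge0; rewrite ?exprn_ge0 ?(ltW hq) ?(ltW hb).
have h1 : (q ^+ 2 / bt + q / bt) * nsq (gu' - lam') <=
   (q ^+ 2 / bt + q / bt) * (sg ^+ 2 * ((1 + q) * nsq (gu - lam)
       + (1 + q^-1) * (bt ^+ 2 * nsq (u - z)))).
  apply: ler_wpM2l => //; apply: (le_trans hA); apply: ler_wpM2l => //.
  exact: exprn_ge0.
have e : (q ^+ 2 / bt + q / bt) * (sg ^+ 2 * ((1 + q) * nsq (gu - lam)
       + (1 + q^-1) * (bt ^+ 2 * nsq (u - z)))) =
   sg ^+ 2 * (1 + q) ^+ 2 * (q / bt * nsq (gu - lam) + bt * nsq (u - z)).
  by field; rewrite !gt_eqF.
rewrite e in h1; rewrite hdot.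
move: hmo hy h1; set D1 := dotv _ _; set D2 := dotv _ _; set A' := nsq (gu' - lam').
set T := nsq (u' - zs); set RR := sg ^+ 2 * (1 + q) ^+ 2.
move=> hmo hy h1.
have -> : - (2 * (D1 - D2)) + q / bt * A' = -2 * D1 + 2 * D2 + q / bt * A' by ring.
have : (q ^+ 2 / bt + q / bt) * A' = q ^+ 2 / bt * A' + q / bt * A' by ring.
lra.
Qed.

Lemma opt_grad m n (f : 'I_m -> 'rV[R]_n -> R) (g : 'I_m -> 'rV[R]_n -> 'rV[R]_n)
  (alpha : 'I_m -> R) (zs : 'rV[R]_n) :
  (forall i, is_gradient (f i) (g i)) ->
  (forall w, \sum_i alpha i * f i zs <= \sum_i alpha i * f i w) ->
  forall j, \sum_i alpha i * g i zs 0 j = 0.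
Proof.
move=> hg hmin.
have key : forall h, 0 <= \sum_i alpha i * dotv (g i zs) h.
  move=> h.
  pose F := \sum_(i < m) (alpha i \*: f i).
  have dF : derivable F zs h.
    apply: derivable_sum => i; apply: derivableZ; apply: diff_derivable.
    exact: (hg i zs).1.
  have DF : 'D_h F zs = \sum_i alpha i * dotv (g i zs) h.
    rewrite derive_sum; last first.
      move=> i; apply: derivableZ; apply: diff_derivable; exact: (hg i zs).1.
    apply: eq_bigr => i _; rewrite deriveZ; last first.
      apply: diff_derivable; exact: (hg i zs).1.
    by rewrite deriveE ?(hg i zs).2 //; exact: (hg i zs).1.
  have HQ : (fun t : R => t^-1 *: ((F \o shift zs) (t *: h) - F zs)) @ 0^' -->
     \sum_i alpha i * dotv (g i zs) h by rewrite -DF; exact: dF.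
  have HR : (fun t : R => t^-1 *: ((F \o shift zs) (t *: h) - F zs)) @ 0^'+ -->
     \sum_i alpha i * dotv (g i zs) h.
    apply: cvg_trans HQ; apply: cvg_app.
    move=> A [e egt0 Ae]; exists e => // x xe xgt0; apply: Ae => //.
    exact/lt0r_neq0.
  rewrite -(cvg_lim _ HR) //.
  apply: limr_ge; first exact/cvgP/HR.
  exists 1 => //= t _ ht.
  have Fx : forall x, F x = \sum_i alpha i * f i x.
    move=> x; rewrite /F; elim/big_rec2: _ => //= i y1 y2 _ <-.
    by [].
  rewrite !Fx.
  apply: mulr_ge0; first by rewrite invr_ge0 ltW.
  rewrite subr_ge0.
  have := hmin (t *: h + zs).
  by rewrite /shift /=.
pose Gv := \sum_i alpha i *: g i zs.
have hG : forall h, \sum_i alpha i * dotv (g i zs) h = dotv Gv h.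
  move=> h; rewrite /dotv sum_exch; apply: eq_bigr => j _.
  rewrite summxE mulr_suml; apply: eq_bigr => i _; rewrite mxE; ring.
have := key (- Gv); rewrite hG.
have -> : dotv Gv (- Gv) = - nsq Gv.
  rewrite /nsq /dotv -[X in _ = X]sumrN; apply: eq_bigr => j _; rewrite mxE; ring.
rewrite oppr_ge0 => hle.
have h0 : nsq Gv = 0 by apply/eqP; rewrite eq_le hle nsq_ge0.
move=> j.
have hsq : forall j0 : 'I_n, true -> 0 <= Gv 0 j0 * Gv 0 j0.
  by move=> j0 _; rewrite -expr2 sqr_ge0.
have := @psumr_eq0P _ _ (fun _ => true) (fun j0 => Gv 0 j0 * Gv 0 j0) hsq h0 j isT.
move/eqP; rewrite mulf_eq0 orbb => /eqP hz.
rewrite -[RHS]hz summxE; apply: eq_bigr => i _; by rewrite mxE.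
Qed.

Lemma desc_cvg (W D : nat -> R) : (forall k, 0 <= W k) -> (forall k, 0 <= D k) ->
  (forall k, W k.+1 <= W k - D k) -> D @ \oo --> 0.
Proof.
move=> hW hD hs.
have hni : nonincreasing_seq W.
  apply/nonincreasing_seqP => k; apply: (le_trans (hs k)).
  by rewrite lerBlDr lerDl.
have cW : cvgn W.
  apply: nonincreasing_is_cvgn => //; exists 0 => _ [k _ <-]; exact: hW.
have cW' : (fun k => W k.+1) @ \oo --> lim (W @ \oo).
  by rewrite (cvg_shiftS W).
have hd : (fun k => W k - W k.+1) @ \oo --> 0.
  rewrite -(subrr (lim (W @ \oo))); exact: cvgB cW cW'.
apply: (@squeeze_cvgr _ _ _ _ (fun _ => 0) (fun k => W k - W k.+1)).
- by near=> k; rewrite hD /= lerBrDr -lerBrDl.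
- exact: cvg_cst.
- exact: hd.
Unshelve. all: by end_near.
Qed.

Lemma small_cvg (x D : nat -> R) (K : R) : 0 < K -> (forall k, 0 <= x k) ->
  (forall k, K * x k <= D k) -> D @ \oo --> 0 -> x @ \oo --> 0.
Proof.
move=> hK hx hxD hD.
apply: (@squeeze_cvgr _ _ _ _ (fun _ => 0) (fun k => K^-1 * D k)).
- near=> k; rewrite hx /= ler_pdivlMl //; exact: hxD.
- exact: cvg_cst.
- rewrite -(mulr0 K^-1); exact: cvgMl_tmp.
Unshelve. all: by end_near.
Qed.

Lemma sqrt_cvg0 (x : nat -> R) : x @ \oo --> 0 -> (fun k => Num.sqrt (x k)) @ \oo --> 0.
Proof.
move=> hx; rewrite -sqrtr0; apply: continuous_cvg => //; exact: sqrt_continuous.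
Qed.

Lemma term_le_sum m (F : 'I_m -> R) i : (forall j, 0 <= F j) -> F i <= \sum_j F j.
Proof.
move=> hF; rewrite (bigD1 i) //= lerDl; apply: sumr_ge0 => j _; exact: hF.
Qed.

Definition qf (c bt sg : R) := (Num.sqrt bt / Num.sqrt (2 * c) + (1 - sg) / sg) / 2.

Lemma params (c bt sg : R) : 0 < c -> 0 < bt -> 0 < sg ->
  sg < Num.sqrt (2 * c) / (Num.sqrt (2 * c) + Num.sqrt bt) ->
  0 < qf c bt sg /\ sg ^+ 2 * (1 + qf c bt sg) ^+ 2 < 1 /\
  0 < 2 * c - bt / qf c bt sg ^+ 2.
Proof.
move=> hc hb hs hsig.
set S := Num.sqrt (2 * c); set T := Num.sqrt bt.
have hS : 0 < S by rewrite sqrtr_gt0 mulr_gt0.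
have hT : 0 < T by rewrite sqrtr_gt0.
rewrite ltr_pdivlMr ?addr_gt0 // in hsig.
set x := T / S; set y := (1 - sg) / sg.
have hx : 0 < x by rewrite divr_gt0.
have hxy : x < y.
  rewrite /x /y ltr_pdivrMr // mulrAC ltr_pdivlMr //.
  rewrite mulrBl mul1r (mulrC T); rewrite mulrDr -/S -/T in hsig. lra.
have hq : qf c bt sg = (x + y) / 2 by [].
rewrite hq.
have hxq : x < (x + y) / 2 by lra.
have hqy : (x + y) / 2 < y by lra.
set q := (x + y) / 2 in hxq hqy *.
have hq0 : 0 < q by lra.
split => //; split.
  have h1 : sg * q < 1 - sg by move: hqy; rewrite /y ltr_pdivlMr // mulrC.
  have h2 : 0 <= sg * (1 + q) by apply: mulr_ge0; lra.
  have h3 : sg * (1 + q) < 1 by lra.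
  rewrite -exprMn; nra.
have hx2 : x ^+ 2 * (2 * c) = bt.
  rewrite /x expr_div_n !sqr_sqrtr ?mulr_ge0 ?ltW //; field.
  by rewrite gt_eqF // mulr_gt0.
have hxq2 : x ^+ 2 < q ^+ 2 by rewrite !expr2; nra.
rewrite subr_gt0 ltr_pdivrMr ?exprn_gt0 //.
rewrite -hx2 mulrC ltr_pM2l // mulr_gt0 //.

Qed.
End S.
Arguments nsq {R n}.
Arguments qf {R}.

Theorem theorem1 (R : realType) (m n : nat)
  (f : 'I_m -> 'rV[R]_n -> R) (g : 'I_m -> 'rV[R]_n -> 'rV[R]_n)
  (s c alpha beta sigma : 'I_m -> R) (delta : R)
  (zstar : 'rV[R]_n)
  (u lam : nat -> 'I_m -> 'rV[R]_n) (z : nat -> 'rV[R]_n) :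
  (0 < m)%N -> (0 < n)%N ->
  (forall i, is_gradient (f i) (g i)) ->
  (forall i, 0 < s i) ->
  (forall i x y, enorm (g i x - g i y) <= s i * enorm (x - y)) ->
  (forall i, 0 < c i) ->
  (forall i x y, dotv (g i x - g i y) (x - y) >= c i * enorm (x - y) ^+ 2) ->
  (forall i, 0 < alpha i) -> \sum_(i < m) alpha i = 1 ->
  (forall i, 0 < beta i) -> 0 < delta ->
  (forall i, 0 < sigma i /\
     sigma i < Num.sqrt (2 * c i) / (Num.sqrt (2 * c i) + Num.sqrt (beta i))) ->
  (forall w, \sum_(i < m) alpha i * f i zstar <= \sum_(i < m) alpha i * f i w) ->
  let e := fun k i (w : 'rV[R]_n) => g i w - lam k i + beta i *: (w - z k) in
  (forall k i, enorm (e k i (u k.+1 i)) <= sigma i * enorm (e k i (u k i))) ->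
  (forall k i, lam k.+1 i = lam k i - beta i *: (u k.+1 i - z k)) ->
  (forall k, z k.+1 =
     (1 + delta)^-1 *:
       ((\sum_(i < m) alpha i * beta i)^-1 *:
          \sum_(i < m) alpha i *: (beta i *: u k.+1 i - lam k.+1 i))
     + (delta / (1 + delta)) *: z k) ->
  forall i : 'I_m,
    (fun k => enorm (e k i (u k.+1 i))) @ \oo --> (0 : R) /\
    (fun k => enorm (u k i - zstar)) @ \oo --> (0 : R) /\
    (fun k => enorm (lam k i - g i zstar)) @ \oo --> (0 : R) /\
    (fun k => enorm (z k - zstar)) @ \oo --> (0 : R).
Proof.
move=> hm hn hgrad hspos hlip hcpos hmono hal hsum hbt hdl hsig hmin e hcrit hlam hz i0.
have hB : 0 < \sum_(i < m) alpha i * beta i.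
  apply: (lt_le_trans _ (@term_le_sum R m (fun i => alpha i * beta i) i0 _)).
  - by rewrite mulr_gt0.
  - by move=> j; rewrite mulr_ge0 // ltW.
have hzj : forall k j, (1 + delta) * (\sum_(i < m) alpha i * beta i) * z k.+1 0 j =
    \sum_i alpha i * (beta i * u k.+1 i 0 j - lam k.+1 i 0 j)
    + delta * (\sum_(i < m) alpha i * beta i) * z k 0 j.
  move=> k j; rewrite (hz k) !mxE summxE.
  have -> : \sum_i (alpha i *: (beta i *: u k.+1 i - lam k.+1 i)) 0 j =
      \sum_i alpha i * (beta i * u k.+1 i 0 j - lam k.+1 i 0 j).
    by apply: eq_bigr => i _; rewrite !mxE.
  field; by rewrite (lt0r_neq0 hB) lt0r_neq0 // addr_gt0.
have hls := @opt_grad R m n f g alpha zstar hgrad hmin.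
pose q i := qf (c i) (beta i) (sigma i).
have hq : forall i, [/\ 0 < q i, sigma i ^+ 2 * (1 + q i) ^+ 2 < 1 &
    0 < 2 * c i - beta i / q i ^+ 2].
  move=> i; have [h1 [h2 h3]] := @params R (c i) (beta i) (sigma i) (hcpos i) (hbt i)
    (hsig i).1 (hsig i).2.
  by split.
pose kap i := q i / beta i.
pose tau i := sigma i ^+ 2 * (1 + q i) ^+ 2.
pose t k i := nsq (u k i - zstar).
pose A k i := nsq (g i (u k i) - lam k i).
pose b k i := nsq (u k i - z k).
pose V k := \sum_i alpha i / beta i * nsq (lam k i - g i zstar + beta i *: (z k - zstar))
   + delta * (\sum_(i < m) alpha i * beta i) * nsq (z k - zstar).
pose W k := V k + \sum_i alpha i * (kap i * A k i + beta i * b k i).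
pose P1 k i := (2 * c i - beta i / q i ^+ 2) * t k.+1 i.
pose P2 k i := (1 - tau i) * (kap i * A k i + beta i * b k i).
pose D k := \sum_i alpha i * (P1 k i + P2 k i).
have hkap : forall i, 0 < kap i.
  by move=> i; have [? ? ?] := hq i; rewrite divr_gt0.
have hP1 : forall k i, 0 <= P1 k i.
  by move=> k i; have [? ? ?] := hq i; rewrite mulr_ge0 ?nsq_ge0 // ltW.
have hX : forall k i, 0 <= kap i * A k i + beta i * b k i.
  by move=> k i; rewrite addr_ge0 // mulr_ge0 ?nsq_ge0 // ltW.
have hP2 : forall k i, 0 <= P2 k i.
  move=> k i; have [? ? ?] := hq i; rewrite mulr_ge0 //; rewrite subr_ge0 ltW //.
have hstep : forall k, W k.+1 <= W k - D k.
  move=> k.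
  have hV := @Vid R m n alpha beta delta (lam k) (lam k.+1) (u k.+1)
    (fun i => g i zstar) (z k) (z k.+1) zstar (fun i => lt0r_neq0 (hbt i)) (hlam k)
    hls (hzj k).
  have hV' : V k.+1 = V k
     - 2 * \sum_i alpha i * dotv (u k.+1 i - zstar) (lam k.+1 i - g i zstar)
     - \sum_i alpha i * beta i * b k.+1 i
     - delta * (\sum_(i < m) alpha i * beta i) * nsq (z k.+1 - z k) by exact: hV.
  have hi : forall i, alpha i * (- (2 * dotv (u k.+1 i - zstar) (lam k.+1 i - g i zstar))
        + kap i * A k.+1 i) <=
      alpha i * (tau i * (kap i * A k i + beta i * b k i) - (2 * c i - beta i / q i ^+ 2) * t k.+1 i).
    move=> i; apply: ler_wpM2l; first exact: ltW.
    have [hq0 _ _] := hq i.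
    exact: (@step_i R n (g i (u k i)) (g i (u k.+1 i)) (g i zstar) (lam k i) (lam k.+1 i)
      (u k i) (u k.+1 i) (z k) zstar (beta i) (c i) (sigma i) (q i) (hbt i) hq0
      (ltW (hsig i).1) (hlam k i) (hcrit k i) (hmono i _ _)).
  have hsumi : \sum_i alpha i * (- (2 * dotv (u k.+1 i - zstar) (lam k.+1 i - g i zstar))
        + kap i * A k.+1 i) <=
      \sum_i alpha i * (tau i * (kap i * A k i + beta i * b k i) - (2 * c i - beta i / q i ^+ 2) * t k.+1 i).
    by apply: ler_sum => i _; exact: hi.
  have E2 : \sum_i alpha i * (- (2 * dotv (u k.+1 i - zstar) (lam k.+1 i - g i zstar))
        + kap i * A k.+1 i) =
     \sum_i alpha i * (kap i * A k.+1 i + beta i * b k.+1 i)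
     - 2 * \sum_i alpha i * dotv (u k.+1 i - zstar) (lam k.+1 i - g i zstar)
     - \sum_i alpha i * beta i * b k.+1 i.
    by rewrite mulr_sumr -!sumrB; apply: eq_bigr => i _; ring.
  have E3 : \sum_i alpha i * (tau i * (kap i * A k i + beta i * b k i)
        - (2 * c i - beta i / q i ^+ 2) * t k.+1 i) =
     \sum_i alpha i * (kap i * A k i + beta i * b k i) - D k.
    by rewrite /D -sumrB; apply: eq_bigr => i _; rewrite /P1 /P2; ring.
  have hd : 0 <= delta * (\sum_(i < m) alpha i * beta i) * nsq (z k.+1 - z k).
    by rewrite mulr_ge0 ?nsq_ge0 // mulr_ge0 // ltW.
  rewrite E2 E3 in hsumi.
  rewrite /W hV'.
  lra.
have hW0 : forall k, 0 <= W k.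
  move=> k; rewrite /W /V; apply: addr_ge0; last first.
    by apply: sumr_ge0 => i _; rewrite mulr_ge0 // ltW.
  apply: addr_ge0.
    apply: sumr_ge0 => i _; rewrite mulr_ge0 ?nsq_ge0 // divr_ge0 // ltW //.
  by rewrite mulr_ge0 ?nsq_ge0 // mulr_ge0 // ltW.
have hD0 : forall k, 0 <= D k.
  by move=> k; apply: sumr_ge0 => i _; rewrite mulr_ge0 ?addr_ge0 // ltW.
have hDc := @desc_cvg R W D hW0 hD0 hstep.
have hDi : forall k i, alpha i * (P1 k i + P2 k i) <= D k.
  move=> k i; apply: (@term_le_sum R m (fun i => alpha i * (P1 k i + P2 k i))).
  by move=> j; rewrite mulr_ge0 ?addr_ge0 // ltW.
have [hq0 htau hcq] := hq i0.
have ht : (fun k => t k.+1 i0) @ \oo --> 0.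
  apply: (@small_cvg R _ D (alpha i0 * (2 * c i0 - beta i0 / q i0 ^+ 2))) => //.
  - by rewrite mulr_gt0.
  - by move=> k; exact: nsq_ge0.
  - move=> k; apply: le_trans (hDi k i0); rewrite -mulrA; apply: ler_wpM2l.
      exact: ltW.
    by rewrite lerDl.
have hA : (fun k => A k i0) @ \oo --> 0.
  apply: (@small_cvg R _ D (alpha i0 * ((1 - tau i0) * kap i0))) => //.
  - by apply: mulr_gt0 => //; apply: mulr_gt0; rewrite ?subr_gt0 ?hkap.
  - by move=> k; exact: nsq_ge0.
  - move=> k; apply: le_trans (hDi k i0); rewrite -mulrA; apply: ler_wpM2l.
      exact: ltW.
    apply: le_trans (_ : P2 k i0 <= _); last by rewrite lerDr.
    rewrite /P2 -mulrA; apply: ler_wpM2l; first by rewrite subr_ge0 ltW.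
    by rewrite lerDl mulr_ge0 ?nsq_ge0 // ltW.
have hb : (fun k => b k i0) @ \oo --> 0.
  apply: (@small_cvg R _ D (alpha i0 * ((1 - tau i0) * beta i0))) => //.
  - by rewrite !mulr_gt0 // ?subr_gt0.
  - by move=> k; exact: nsq_ge0.
  - move=> k; apply: le_trans (hDi k i0); rewrite -mulrA; apply: ler_wpM2l.
      exact: ltW.
    apply: le_trans (_ : P2 k i0 <= _); last by rewrite lerDr.
    rewrite /P2 -mulrA; apply: ler_wpM2l; first by rewrite subr_ge0 ltW.
    by rewrite lerDr mulr_ge0 ?nsq_ge0 // ltW.
have ht0 : (fun k => t k i0) @ \oo --> 0 by rewrite -(cvg_shiftS (fun k => t k i0)).
have hA1 : (fun k => A k.+1 i0) @ \oo --> 0 by rewrite (cvg_shiftS (fun k => A k i0)).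
have hsq : forall (x : nat -> 'rV[R]_n), (fun k => nsq (x k)) @ \oo --> 0 ->
    (fun k => enorm (x k)) @ \oo --> 0.
  by move=> x hx; exact: (@sqrt_cvg0 R _ hx).
have hlim2 : forall (y1 y2 : nat -> R) (K : R), y1 @ \oo --> 0 -> y2 @ \oo --> 0 ->
    (fun k => 2 * (K * y1 k) + 2 * y2 k) @ \oo --> 0.
  move=> y1 y2 K h1 h2.
  have := cvgD (cvgMl_tmp (a:=2) (cvgMl_tmp (a:=K) h1)) (cvgMl_tmp (a:=2) h2).
  by rewrite !mulr0 addr0; apply; apply: nbhs_filter.
split; [|split; [|split]].
- apply: hsq.
  have -> : (fun k => nsq (e k i0 (u k.+1 i0))) = (fun k => A k.+1 i0).
    apply: funext => k; rewrite /A; congr nsq.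
    by apply/rowP => j; rewrite /e (hlam k) !mxE; ring.
  exact: hA1.
- exact: hsq.
- apply: hsq.
  apply: (@small_cvg R _ (fun k => 2 * (s i0 ^+ 2 * t k i0) + 2 * A k i0) 1 ltr01).
  + by move=> k; exact: nsq_ge0.
  + move=> k; rewrite mul1r.
    have -> : lam k i0 - g i0 zstar = (g i0 (u k i0) - g i0 zstar) - (g i0 (u k i0) - lam k i0).
      by apply/rowP => j; rewrite !mxE; ring.
    apply: le_trans (@nsq_sub2 R n _ _) _.
    rewrite lerD2r ler_pM2l //.
    rewrite /t -!enorm_sq -exprMn; apply: sq_le; first exact: enorm_ge0.
    exact: hlip.
  + exact: hlim2.
- apply: hsq.
  apply: (@small_cvg R _ (fun k => 2 * (1 * t k i0) + 2 * b k i0) 1 ltr01).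
  + by move=> k; exact: nsq_ge0.
  + move=> k; rewrite !mul1r.
    have -> : z k - zstar = (u k i0 - zstar) - (u k i0 - z k).
      by apply/rowP => j; rewrite !mxE; ring.
    exact: (@nsq_sub2 R n _ _).
  + exact: hlim2.
Qed.
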